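(* Let $u\geq 2$ be an integer and $C(u)=\{n\in\mathbb{Z} : u\nmid n\}$. Then every non-negative integer is a sum of at most $5940$ squares of elements of $C(u)$.
   Context: The empty sum is $0$. *)

(* Defs.v *)
From Stdlib Require Import ZArith List.
Open Scope Z_scope.

Definition C (u : Z) (n : Z) : Prop := ~ (u | n)%Z.

Definition sum_sq (l : list Z) : Z := fold_right (fun x acc => x * x + acc) 0 l.

(* Main.v *)
Require Import Defs.
From Stdlib Require Import ZArith List Lia Znumtheory Classical.
Open Scope Z_scope.

Definition S4 (n : Z) : Prop := exists a b c d, n = a*a + b*b + c*c + d*d.

Lemma S4_mul n m : S4 n -> S4 m -> S4 (n*m).
Proof.
  intros [a1 [a2 [a3 [a4 Ha]]]] [b1 [b2 [b3 [b4 Hb]]]]; subst.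
  exists (a1*b1+a2*b2+a3*b3+a4*b4), (a1*b2-a2*b1+a3*b4-a4*b3),
         (a1*b3-a3*b1+a4*b2-a2*b4), (a1*b4-a4*b1+a2*b3-a3*b2).
  ring.
Qed.

Lemma reduce (x m : Z) : 0 < m -> exists y k, x = y + m*k /\ -m <= 2*y < m.
Proof.
  intros Hm.
  pose proof (Z.div_mod m 2 ltac:(lia)). pose proof (Z.mod_pos_bound m 2 ltac:(lia)).
  set (q := m / 2) in *.
  exists ((x+q) mod m - q), ((x+q)/m).
  pose proof (Z.div_mod (x+q) m ltac:(lia)). pose proof (Z.mod_pos_bound (x+q) m Hm).
  set (r := (x+q) mod m) in *. set (k := (x+q)/m) in *. lia.
Qed.

Lemma sq_eq a m : 0 < m -> -m <= a < m -> a*a = m*m -> a = -m.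
Proof.
  intros Hm Hb He. assert (H : (a-m)*(a+m) = 0) by lia.
  apply Z.mul_eq_0 in H. lia.
Qed.

Lemma not_div p m : prime p -> 1 < m < p -> ~ (m | p).
Proof. intros Hp Hm Hd. apply prime_divisors in Hd; auto. lia. Qed.

Lemma descent_step p m : prime p -> 1 < m < p -> S4 (m*p) ->
  exists r, 0 < r < m /\ S4 (r*p).
Proof.
  intros Hp Hm [x1 [x2 [x3 [x4 Hx]]]].
  destruct (reduce x1 m) as [y1 [k1 [E1 B1]]]; [lia|].
  destruct (reduce x2 m) as [y2 [k2 [E2 B2]]]; [lia|].
  destruct (reduce x3 m) as [y3 [k3 [E3 B3]]]; [lia|].
  destruct (reduce x4 m) as [y4 [k4 [E4 B4]]]; [lia|].
  pose (r := p - (k1*(2*y1+m*k1) + k2*(2*y2+m*k2) + k3*(2*y3+m*k3) + k4*(2*y4+m*k4))).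
  assert (Hy : y1*y1+y2*y2+y3*y3+y4*y4 = m*r).
  { assert (Hx' := Hx). rewrite E1, E2, E3, E4 in Hx'. unfold r.
    rewrite Z.mul_sub_distr_l, Hx'. ring. }
  clearbody r.
  assert (F1 : 4*(y1*y1) <= m*m) by nia.
  assert (F2 : 4*(y2*y2) <= m*m) by nia.
  assert (F3 : 4*(y3*y3) <= m*m) by nia.
  assert (F4 : 4*(y4*y4) <= m*m) by nia.
  assert (G1 : 0 <= y1*y1) by nia.
  assert (G2 : 0 <= y2*y2) by nia.
  assert (G3 : 0 <= y3*y3) by nia.
  assert (G4 : 0 <= y4*y4) by nia.
  assert (Hr0 : 0 <= r) by nia.
  assert (Hrm : r <= m) by nia.
  exists r. split; [split|].
  - destruct (Z.eq_dec r 0) as [e|]; [|lia]. exfalso.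
    subst r. rewrite Z.mul_0_r in Hy.
    assert (y1 = 0) by nia. assert (y2 = 0) by nia.
    assert (y3 = 0) by nia. assert (y4 = 0) by nia. subst.
    apply (not_div p m Hp Hm).
    exists (k1*k1+k2*k2+k3*k3+k4*k4).
    apply Z.mul_reg_l with m; [lia|]. rewrite Hx. ring.
  - destruct (Z.eq_dec r m) as [e|]; [|lia]. exfalso. subst r.
    assert (H1 : 2*y1 = -m) by (apply sq_eq; lia).
    assert (H2 : 2*y2 = -m) by (apply sq_eq; lia).
    assert (H3 : 2*y3 = -m) by (apply sq_eq; lia).
    assert (H4 : 2*y4 = -m) by (apply sq_eq; lia).
    apply (not_div p m Hp Hm).
    exists (k1*k1-k1+k2*k2-k2+k3*k3-k3+k4*k4-k4+1).
    apply Z.mul_reg_l with (4*m); [lia|].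
    transitivity (4*(m*p)); [ring|]. rewrite Hx, E1, E2, E3, E4.
    transitivity ((2*y1+2*m*k1)*(2*y1+2*m*k1)+(2*y2+2*m*k2)*(2*y2+2*m*k2)
                 +(2*y3+2*m*k3)*(2*y3+2*m*k3)+(2*y4+2*m*k4)*(2*y4+2*m*k4)); [ring|].
    rewrite H1, H2, H3, H4. ring.
  - exists (r + k1*y1+k2*y2+k3*y3+k4*y4), (k1*y2-k2*y1+k3*y4-k4*y3),
           (k1*y3-k3*y1+k4*y2-k2*y4), (k1*y4-k4*y1+k2*y3-k3*y2).
    apply Z.mul_reg_l with (m*m); [nia|].
    transitivity ((m*p)*(m*r)); [ring|].
    rewrite Hx, <- Hy.
    assert (Z1 : x1*y1+x2*y2+x3*y3+x4*y4 = m*(r + k1*y1+k2*y2+k3*y3+k4*y4)).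
    { transitivity (y1*y1+y2*y2+y3*y3+y4*y4 + m*(k1*y1+k2*y2+k3*y3+k4*y4)).
      rewrite E1, E2, E3, E4; ring. rewrite Hy; ring. }
    assert (Z2 : x1*y2-x2*y1+x3*y4-x4*y3 = m*(k1*y2-k2*y1+k3*y4-k4*y3))
      by (rewrite E1, E2, E3, E4; ring).
    assert (Z3 : x1*y3-x3*y1+x4*y2-x2*y4 = m*(k1*y3-k3*y1+k4*y2-k2*y4))
      by (rewrite E1, E2, E3, E4; ring).
    assert (Z4 : x1*y4-x4*y1+x2*y3-x3*y2 = m*(k1*y4-k4*y1+k2*y3-k3*y2))
      by (rewrite E1, E2, E3, E4; ring).
    transitivity ((x1*y1+x2*y2+x3*y3+x4*y4)*(x1*y1+x2*y2+x3*y3+x4*y4)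
      + (x1*y2-x2*y1+x3*y4-x4*y3)*(x1*y2-x2*y1+x3*y4-x4*y3)
      + (x1*y3-x3*y1+x4*y2-x2*y4)*(x1*y3-x3*y1+x4*y2-x2*y4)
      + (x1*y4-x4*y1+x2*y3-x3*y2)*(x1*y4-x4*y1+x2*y3-x3*y2)); [ring|].
    rewrite Z1, Z2, Z3, Z4. ring.
Qed.

Lemma descent p : prime p -> forall n : nat, forall m, 0 < m -> m <= Z.of_nat n -> m < p ->
  S4 (m*p) -> S4 p.
Proof.
  intros Hp n. induction n as [|n IH]; intros m H0 H1 H2 HS; [lia|].
  destruct (Z.eq_dec m 1) as [e|ne].
  - subst. rewrite Z.mul_1_l in HS. exact HS.
  - destruct (descent_step p m Hp ltac:(lia) HS) as [r [Hr HS']].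
    apply (IH r); lia || exact HS'.
Qed.

Lemma mod_eq_div a b p : 0 < p -> a mod p = b mod p -> (p | a - b).
Proof.
  intros Hp E. pose proof (Z.div_mod a p ltac:(lia)). pose proof (Z.div_mod b p ltac:(lia)).
  exists (a/p - b/p). rewrite E in *. nia.
Qed.

Lemma div_small p d : 0 < p -> (p | d) -> -p < d < p -> d = 0.
Proof. intros Hp [c Hc] Hd. subst. destruct (Z.lt_trichotomy c 0) as [h|[h|h]]; [nia|subst; ring|nia]. Qed.

Lemma two_sq_mod p : prime p -> p <> 2 -> exists x y, 0 <= x /\ 0 <= y /\ 2*x < p /\ 2*y < p
   /\ (p | x*x + y*y + 1).
Proof.
  intros Hp Hp2.
  assert (Hp1 : 1 < p) by (destruct Hp; lia).
  pose proof (Z.div_mod p 2 ltac:(lia)). pose proof (Z.mod_pos_bound p 2 ltac:(lia)).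
  assert (Hodd : p mod 2 = 1).
  { destruct (Z.eq_dec (p mod 2) 0) as [e|]; [|lia]. exfalso.
    assert (Hd : (2 | p)) by (exists (p/2); lia).
    apply prime_divisors in Hd; auto. lia. }
  set (h := p / 2) in *.
  apply NNPP; intro Hno.
  set (I := seq 0 (S (Z.to_nat h))).
  set (L1 := map (fun i => (Z.of_nat i * Z.of_nat i) mod p) I).
  set (L2 := map (fun i => (-1 - Z.of_nat i * Z.of_nat i) mod p) I).
  set (T := map Z.of_nat (seq 0 (Z.to_nat p))).
  assert (HI : forall i, In i I -> 0 <= Z.of_nat i <= h).
  { intros i Hi. unfold I in Hi. apply in_seq in Hi. lia. }
  assert (ND : NoDup (L1 ++ L2)).
  { apply NoDup_app.
    - apply NoDup_map_NoDup_ForallPairs; [|apply seq_NoDup].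
      intros a b Ha Hb E. apply HI in Ha. apply HI in Hb.
      apply mod_eq_div in E; [|lia].
      replace (Z.of_nat a * Z.of_nat a - Z.of_nat b * Z.of_nat b) with
        ((Z.of_nat a - Z.of_nat b) * (Z.of_nat a + Z.of_nat b)) in E by ring.
      apply prime_mult in E; auto.
      destruct E as [E|E]; apply div_small in E; lia.
    - apply NoDup_map_NoDup_ForallPairs; [|apply seq_NoDup].
      intros a b Ha Hb E. apply HI in Ha. apply HI in Hb.
      apply mod_eq_div in E; [|lia].
      replace (-1 - Z.of_nat a * Z.of_nat a - (-1 - Z.of_nat b * Z.of_nat b)) with
        ((Z.of_nat b - Z.of_nat a) * (Z.of_nat b + Z.of_nat a)) in E by ring.
      apply prime_mult in E; auto.
      destruct E as [E|E]; apply div_small in E; lia.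
    - intros v H1' H2'. unfold L1, L2 in *. apply in_map_iff in H1', H2'.
      destruct H1' as [a [Ea Ha]]. destruct H2' as [b [Eb Hb]].
      apply HI in Ha. apply HI in Hb. rewrite <- Eb in Ea.
      apply mod_eq_div in Ea; [|lia].
      apply Hno. exists (Z.of_nat a), (Z.of_nat b).
      split; [lia|]. split; [lia|]. split; [lia|]. split; [lia|].
      replace (Z.of_nat a * Z.of_nat a + Z.of_nat b * Z.of_nat b + 1) with
        (Z.of_nat a * Z.of_nat a - (-1 - Z.of_nat b * Z.of_nat b)) by ring.
      exact Ea. }
  assert (INC : incl (L1 ++ L2) T).
  { intros v Hv. apply in_app_iff in Hv.
    assert (Hb : 0 <= v < p).
    { destruct Hv as [Hv|Hv]; unfold L1, L2 in Hv; apply in_map_iff in Hv;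
      destruct Hv as [a [Ea _]]; subst v; apply Z.mod_pos_bound; lia. }
    unfold T. apply in_map_iff. exists (Z.to_nat v). split; [lia|].
    apply in_seq. lia. }
  pose proof (NoDup_incl_length ND INC) as HL.
  unfold L1, L2, T, I in HL. rewrite length_app, !length_map, !length_seq in HL.
  lia.
Qed.

Lemma S4_prime p : prime p -> S4 p.
Proof.
  intros Hp.
  assert (Hp1 : 1 < p) by (destruct Hp; lia).
  destruct (Z.eq_dec p 2) as [e|ne].
  - subst. exists 1, 1, 0, 0. ring.
  - destruct (two_sq_mod p Hp ne) as [x [y [Hx [Hy [Hx2 [Hy2 [m Hm]]]]]]].
    apply (descent p Hp (Z.to_nat m) m); try lia.
    + assert (4*(x*x) <= (p-1)*(p-1)) by nia. assert (4*(y*y) <= (p-1)*(p-1)) by nia.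
      destruct (Z_lt_le_dec m p); [lia|]. assert (p*p <= m*p) by nia. nia.
    + exists x, y, 1, 0. rewrite <- Hm. ring.
Qed.

Lemma prime_factor n : 1 < n -> exists p, prime p /\ (p | n).
Proof.
  intros Hn. assert (H0 : 0 <= n) by lia. revert Hn.
  pattern n; apply Z_lt_induction; [|exact H0]. clear n H0.
  intros n IH Hn.
  destruct (prime_dec n) as [P|NP].
  - exists n. split; [exact P | apply Z.divide_refl].
  - destruct (not_prime_divide n Hn NP) as [d [Hd Hdn]].
    destruct (IH d ltac:(lia) ltac:(lia)) as [p [Pp Hpd]].
    exists p. split; [exact Pp|]. eapply Z.divide_trans; eauto.
Qed.

Lemma lagrange n : 0 <= n -> S4 n.
Proof.
  intros H0. generalize H0. pattern n; apply Z_lt_induction; [|exact H0]. clear n H0.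
  intros n IH H0.
  destruct (Z_lt_le_dec 1 n) as [Hn|Hn].
  - destruct (prime_factor n Hn) as [p [Pp [k Hk]]].
    assert (Hp1 : 1 < p) by (destruct Pp; lia).
    subst n. apply S4_mul; [|apply S4_prime; exact Pp].
    apply IH; nia.
  - destruct (Z.eq_dec n 0) as [e|ne].
    + subst. exists 0,0,0,0. ring.
    + assert (n = 1) by lia. subst. exists 1,0,0,0. ring.
Qed.

Definition zg (u x : Z) : Prop := x = 0 \/ C u x.

Lemma sum_sq_app l1 l2 : sum_sq (l1 ++ l2) = sum_sq l1 + sum_sq l2.
Proof. induction l1 as [|a l IH]; simpl; [ring|]. rewrite IH. ring. Qed.

Lemma clean u l : Forall (zg u) l ->
  exists l', (length l' <= length l)%nat /\ Forall (C u) l' /\ sum_sq l' = sum_sq l.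
Proof.
  induction l as [|a l IH]; intros H.
  - exists nil. simpl. repeat split; auto.
  - inversion H as [|? ? Ha Hl]; subst. destruct (IH Hl) as [l' [L1 [F1 S1]]].
    destruct Ha as [Ha|Ha].
    + subst. exists l'. simpl. split; [lia|]. split; [auto|]. try (rewrite S1; ring).
    + exists (a :: l'). simpl. split; [lia|]. split; [auto|]. try (rewrite S1; ring).
Qed.

Lemma zg_small u a : 2 <= u -> -u < a < u -> zg u a.
Proof.
  intros Hu Ha. destruct (classic (u | a)) as [D|D]; [left|right; exact D].
  apply (div_small u a); lia || exact D.
Qed.

Lemma small u R : 2 <= u -> 0 <= R < u*u ->
  exists l, length l = 4%nat /\ Forall (zg u) l /\ sum_sq l = R.
Proof.
  intros Hu HR. destruct (lagrange R ltac:(lia)) as [a [b [c [d E]]]].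
  exists (a::b::c::d::nil). simpl. split; [reflexivity|]. split.
  - assert (0 <= a*a) by nia. assert (0 <= b*b) by nia.
    assert (0 <= c*c) by nia. assert (0 <= d*d) by nia.
    repeat (constructor; [apply zg_small; auto; nia|]); constructor.
  - rewrite E. ring.
Qed.

Lemma entry u a : 2 <= u -> a*a < 4*(u*u) ->
  exists l, (length l <= 5)%nat /\ Forall (zg u) l /\ sum_sq l = a*a.
Proof.
  intros Hu Ha. destruct (classic (u | a)) as [[c Hc]|D].
  - subst a. destruct (Z.eq_dec c 0) as [e|ne].
    + subst. exists (0::nil). simpl. split; [lia|]. split; [constructor; [left; ring|constructor]|ring].
    + assert (c*c < 4) by nia. assert (-2 < c < 2) by nia. assert (c*c = 1) by nia.
      destruct (small u (2*u-1) Hu ltac:(nia)) as [l [L [F S]]].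
      exists ((u-1)::l). simpl. split; [lia|]. split.
      * constructor; auto. apply zg_small; lia.
      * rewrite S. nia.
  - exists (a::nil). simpl. split; [lia|]. split; [constructor; [right; exact D|constructor]|ring].
Qed.

Lemma mid u R : 2 <= u -> 0 <= R < 4*(u*u) ->
  exists l, (length l <= 20)%nat /\ Forall (zg u) l /\ sum_sq l = R.
Proof.
  intros Hu HR. destruct (lagrange R ltac:(lia)) as [a [b [c [d E]]]].
  assert (0 <= a*a) by nia. assert (0 <= b*b) by nia.
  assert (0 <= c*c) by nia. assert (0 <= d*d) by nia.
  destruct (entry u a Hu ltac:(lia)) as [la [La [Fa Sa]]].
  destruct (entry u b Hu ltac:(lia)) as [lb [Lb [Fb Sb]]].
  destruct (entry u c Hu ltac:(lia)) as [lc [Lc [Fc Sc]]].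
  destruct (entry u d Hu ltac:(lia)) as [ld [Ld [Fd Sd]]].
  exists (la ++ lb ++ lc ++ ld). rewrite !length_app, !sum_sq_app.
  split; [lia|]. split.
  - repeat (apply Forall_app; split); auto.
  - lia.
Qed.

Lemma good_pm u a s : 2 <= u -> (s = 1 \/ s = -1) -> C u (u*a + s).
Proof.
  intros Hu Hs [k Hk]. destruct Hs; subst s.
  - assert (u*(k-a) = 1) by lia. destruct (Z.lt_trichotomy (k-a) 1) as [h|[h|h]]; nia.
  - assert (u*(a-k) = 1) by lia. destruct (Z.lt_trichotomy (a-k) 1) as [h|[h|h]]; nia.
Qed.

Theorem theorem2p3 (u : Z) (hu : 2 <= u) (N : Z) (hN : 0 <= N) :
  exists l : list Z,
    (length l <= 5940)%nat /\ Forall (C u) l /\ sum_sq l = N.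
Proof.
  assert (Hl : exists l, (length l <= 28)%nat /\ Forall (zg u) l /\ sum_sq l = N).
  { destruct (Z_lt_le_dec N (4*(u*u))) as [Hs|Hb].
    - destruct (mid u N hu ltac:(lia)) as [l [L [F S]]]. exists l. split; [lia|auto].
    - set (D := 2*(u*u)).
      assert (HD : 0 < D) by nia.
      pose proof (Z.div_mod (N-8) D ltac:(lia)). pose proof (Z.mod_pos_bound (N-8) D HD).
      set (M := (N-8)/D) in *. set (R := (N-8) mod D) in *.
      assert (HM : 0 <= M) by nia.
      destruct (lagrange M HM) as [a [b [c [d E]]]].
      destruct (mid u R hu ltac:(lia)) as [l [L [F S]]].
      exists ((u*a+1)::(u*a-1)::(u*b+1)::(u*b-1)::(u*c+1)::(u*c-1)::(u*d+1)::(u*d-1)::l).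
      simpl. split; [lia|]. split.
      + assert (G : forall x s, (s = 1 \/ s = -1) -> zg u (u*x+s)) by
          (intros; right; apply good_pm; auto).
        assert (G' : forall x, zg u (u*x-1)) by
          (intros x; replace (u*x-1) with (u*x + -1) by ring; apply G; auto).
        repeat (constructor; [first [apply G' | apply G; auto] |]); exact F.
      + rewrite S. transitivity (D*M + 8 + R); [|lia].
        unfold D. rewrite E. ring. }
  destruct Hl as [l [L [F S]]]. destruct (clean u l F) as [l' [L' [F' S']]].
  exists l'. split; [apply (Nat.le_trans _ _ _ L'); apply (Nat.le_trans _ _ _ L); apply Nat.leb_le; reflexivity|]. split; [exact F'|]. rewrite S'. exact S.
Qed.
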